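(* Let $M$ be a complete metric space and let $C^*(M)$ denote the normed space of all bounded continuous $\mathbb{K}$-valued functions on $M$ (where $\mathbb{K}=\mathbb{R}$ or $\mathbb{C}$), equipped with the supremum norm. If $C^*(M)$ admits an isometric shift, then $M$ is separable.
   Context: For a normed space $\mathcal{K}$, a map $T:\mathcal{K}\to\mathcal{K}$ is an (isometric) shift operator if (1) $T$ is a linear isometry, (2) the range $T(\mathcal{K})$ has codimension $1$ in $\mathcal{K}$, and (3) $\bigcap_{n=1}^{\infty} T^n(\mathcal{K})=\{0\}$. *)

(* Defs.v *)
From mathcomp Require Import all_boot all_algebra.
From mathcomp Require Import all_classical all_reals all_analysis.
From mathcomp Require Import complex.
Import Num.Theory GRing.Theory numFieldNormedType.Exports.
Local Open Scope classical_set_scope.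
Local Open Scope ring_scope.

(* The scalar field K is an arbitrary numFieldType; it is topologized by its
   norm through K^o (numFieldTopology).  We instantiate K := R and K := R[i]. *)

Definition Cstar (K : numFieldType) (M : topologicalType) : set (M -> K^o) :=
  [set f | continuous f /\ exists r : K, forall x, `|f x| <= r].
Arguments Cstar {K M}.

Definition supnorm_le (K : numFieldType) (M : Type) (f : M -> K^o) (r : K) :=
  forall x, `|f x| <= r.
Arguments supnorm_le {K M}.

(* T is an (isometric) shift operator on the normed space C^*(M) with the
   supremum norm:
   - T maps C^*(M) into C^*(M) and is K-linear on it;
   - T is an isometry: ||T f|| = ||f|| (expressed as: f and T f have exactly
     the same upper bounds for their sup norms);
   - T(C^*(M)) has codimension 1 in C^*(M);
   - the ranges T^n(C^*(M)), n >= 1, intersect in {0}. *)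
Definition isometric_shift (K : numFieldType) (M : topologicalType)
    (T : (M -> K^o) -> (M -> K^o)) : Prop :=
  [/\ (forall f, Cstar f -> Cstar (T f)),
      (forall (a : K) f g, Cstar f -> Cstar g ->
          T (fun x => a * f x + g x) = (fun x => a * T f x + T g x)),
      (forall f, Cstar f -> forall r : K, supnorm_le f r <-> supnorm_le (T f) r),
      (exists2 g, Cstar g &
          ~ (exists2 h, Cstar h & g = T h) /\
          forall f, Cstar f ->
            exists2 h, Cstar h & exists c : K, f = (fun x => T h x + c * g x))
    & (forall f, Cstar f ->
          (forall n : nat, (0 < n)%N -> exists2 h, Cstar h & f = iter n T h) ->
          f = (fun _ => 0))].

Definition has_isometric_shift (K : numFieldType) (M : topologicalType) :=
  exists T, @isometric_shift K M T.

Definition complete_space (T : uniformType) :=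
  forall F : set_system T, ProperFilter F -> cauchy F -> exists x : T, F --> x.

Definition separable_space (T : topologicalType) :=
  exists S : set T, countable S /\ dense S.

(* Main.v *)
Require Import Defs.
From mathcomp Require Import all_boot all_algebra.
From mathcomp Require Import all_classical all_reals all_analysis.
From mathcomp Require Import complex.
From mathcomp Require Import order finmap.
From Stdlib Require Import ClassicalEpsilon.
From mathcomp Require Import ring lra.
Import Order.TTheory Num.Theory GRing.Theory numFieldNormedType.Exports.
Local Open Scope classical_set_scope.
Local Open Scope ring_scope.

Set Implicit Arguments. Unset Strict Implicit. Unset Printing Implicit Defensive.
Local Open Scope complex_scope.
Lemma AK_R (R : realType) (x : R) : 0 < x -> exists n : nat, x < n%:R.
Proof. by move=> x0; exists (Num.Def.archi_bound x); apply: archi_boundP; rewrite ltW. Qed.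
Lemma natC (R : realType) (n : nat) : (n%:R : R[i]) = (n%:R)%:C.
Proof. by rewrite rmorph_nat. Qed.
Lemma AK_C (R : realType) (x : R[i]) : 0 < x -> exists n : nat, x < n%:R.
Proof.
case: x => a b; rewrite ltcE /= => /andP[/eqP -> a0].
have [n Hn] := AK_R a0; exists n.
by rewrite natC ltcE /= eqxx.
Qed.
Local Close Scope complex_scope.
Lemma CK_R (R : realType) (u : nat -> R) :
  (forall n m, (n <= m)%N -> `|u n - u m| <= n.+1%:R^-1) ->
  exists l, forall n, `|u n - l| <= n.+1%:R^-1.
Proof.
move=> H.
have cu : cauchy (u @ \oo).
  apply/cauchyP => e e0.
  have [N HN] : exists N : nat, N.+1%:R^-1 < e.
    have ei : 0 < e^-1 by rewrite invr_gt0.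
    have [n Hn] := AK_R ei; exists n.
    rewrite -[e]invrK ltf_pV2 ?posrE ?invr_gt0 ?ltr0Sn//.
    by apply: (lt_le_trans Hn); rewrite ler_nat.
  exists (u N); exists N => // n /= Nn.
  rewrite -ball_normE /=. exact: le_lt_trans (H _ _ Nn) HN.
have [l Hl] := iffLR (cvg_ex _) (cauchy_cvg _ cu).
exists l => n.
move/cvgrPdist_lt : Hl => Hl2.
apply/ler_addgt0Pr => e e0.
have [N _ HN] := Hl2 e e0.
have nm : (n <= maxn n N)%N by rewrite leq_maxl.
have Nm : (N <= maxn n N)%N by rewrite leq_maxr.
have -> : u n - l = (u n - u (maxn n N)) + (u (maxn n N) - l) by rewrite addrA subrK.
apply: (le_trans (ler_normD _ _)); apply: lerD; last by rewrite distrC ltW// HN.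
exact: (H _ _ nm).
Qed.
Local Open Scope complex_scope.
Lemma normCr (R : realType) (x : R) : `|x%:C| = `|x|%:C.
Proof. by rewrite normc_def /= expr0n addr0 sqrtr_sqr. Qed.
Lemma ReB (R : realType) (x y : R[i]) : complex.Re (x - y) = complex.Re x - complex.Re y.
Proof. by case: x => a b; case: y => c d. Qed.
Lemma ImB (R : realType) (x y : R[i]) : complex.Im (x - y) = complex.Im x - complex.Im y.
Proof. by case: x => a b; case: y => c d. Qed.
Lemma normRe (R : realType) (x : R[i]) : `|complex.Re x|%:C <= `|x|.
Proof. exact: normc_ge_Re. Qed.
Lemma normIm (R : realType) (x : R[i]) : `|complex.Im x|%:C <= `|x|.
Proof.
case: x => a b; rewrite normc_def /= lecR.
rewrite -sqrtr_sqr; apply: ler_wsqrtr; rewrite lerDr sqr_ge0//.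
Qed.
Lemma normReIm (R : realType) (x : R[i]) : `|x| <= (`|complex.Re x| + `|complex.Im x|)%:C.
Proof.
rewrite [X in `|X|]complexE rmorphD /=.
apply: (le_trans (ler_normD _ _)); rewrite lerD// ?normCr// normrM.
by rewrite normCr (_ : `|'i| = 1) ?mul1r// normc_def /= expr0n expr1n add0r sqrtr1.
Qed.
Lemma invC (R : realType) (n : nat) : (n.+1%:R : R[i])^-1 = ((n.+1%:R : R)^-1)%:C.
Proof. by rewrite natC fmorphV. Qed.
Lemma CK_C (R : realType) (u : nat -> R[i]) :
  (forall n m, (n <= m)%N -> `|u n - u m| <= n.+1%:R^-1) ->
  exists l, forall n, `|u n - l| <= 2 / n.+1%:R.
Proof.
move=> H.
have HRe n m : (n <= m)%N -> `|complex.Re (u n) - complex.Re (u m)| <= n.+1%:R^-1.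
  by move=> nm; have := le_trans (normRe (u n - u m)) (H n m nm); rewrite invC lecR ReB.
have HIm n m : (n <= m)%N -> `|complex.Im (u n) - complex.Im (u m)| <= n.+1%:R^-1.
  by move=> nm; have := le_trans (normIm (u n - u m)) (H n m nm); rewrite invC lecR ImB.
have [a Ha] := CK_R HRe.
have [b Hb] := CK_R HIm.
exists (a +i* b) => n.
apply: (le_trans (normReIm _)).
rewrite (_ : 2 / n.+1%:R = ((n.+1%:R)^-1 + (n.+1%:R)^-1 : R)%:C).
  by rewrite lecR ReB ImB /= lerD ?Ha ?Hb.
by rewrite rmorphD /= -invC; ring.
Qed.
Local Close Scope complex_scope.
Section Gen.
Variables (R : realType) (M : metricType R) (K : numFieldType).
Local Notation E := (@Cstar K M).

Lemma E_lin (a : K) (f g : M -> K^o) : E f -> E g -> E (fun x => a * f x + g x).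
Proof.
move=> [fc [r fr]] [gc [s gs]]; split.
  move=> x; apply: cvgD; last exact: gc.
  exact: cvgMr (fc x).
exists (`|a| * r + s) => x; rewrite (le_trans (ler_normD _ _))// normrM.
by rewrite lerD// ler_wpM2l.
Qed.

Lemma E0 : E (fun _ => 0).
Proof. by split; [move=> x; exact: cvg_cst | exists 0 => x; rewrite normr0]. Qed.

Lemma E_scale (a : K) f : E f -> E (fun x => a * f x).
Proof.
move=> Ef; have := E_lin a Ef E0.
by rewrite (_ : (fun x => a * f x + 0) = (fun x => a * f x))//; apply/funext => x; rewrite addr0.
Qed.

Lemma E_sub f g : E f -> E g -> E (fun x => f x - g x).
Proof.
move=> Ef Eg; have := E_lin (-1) Eg Ef.
by rewrite (_ : (fun x => -1 * g x + f x) = (fun x => f x - g x))//; apply/funext => x; rewrite mulN1r addrC.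
Qed.

Variable T : (M -> K^o) -> (M -> K^o).
Hypothesis TE : forall f, E f -> E (T f).
Hypothesis Tlin : forall (a : K) f g, E f -> E g ->
          T (fun x => a * f x + g x) = (fun x => a * T f x + T g x).
Hypothesis Tiso : forall f, E f -> forall r : K, supnorm_le f r <-> supnorm_le (T f) r.

Lemma T0 : T (fun _ => 0) = (fun _ => 0).
Proof.
have := Tlin (-1) E0 E0.
rewrite (_ : (fun x : M => -1 * 0 + 0) = (fun _ => 0 : K^o)); last first.
  by apply/funext => x; rewrite mulr0 addr0.
by move=> ->; apply/funext => x; rewrite mulN1r addNr.
Qed.

Lemma TZ a f : E f -> T (fun x => a * f x) = (fun x => a * T f x).
Proof.
move=> Ef; have := Tlin a Ef E0; rewrite T0.
rewrite (_ : (fun x => a * f x + 0) = (fun x => a * f x)); last by apply/funext => x; rewrite addr0.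
by move=> ->; apply/funext => x; rewrite addr0.
Qed.

Lemma TB f g : E f -> E g -> T (fun x => f x - g x) = (fun x => T f x - T g x).
Proof.
move=> Ef Eg; have := Tlin (-1) Eg Ef.
rewrite (_ : (fun x => -1 * g x + f x) = (fun x => f x - g x)); last first.
  by apply/funext => x; rewrite mulN1r addrC.
by move=> ->; apply/funext => x; rewrite mulN1r addrC.
Qed.

Lemma TD f g : E f -> E g -> T (fun x => f x + g x) = (fun x => T f x + T g x).
Proof.
move=> Ef Eg; have := Tlin 1 Ef Eg.
rewrite (_ : (fun x => 1 * f x + g x) = (fun x => f x + g x)); last first.
  by apply/funext => x; rewrite mul1r.
by move=> ->; apply/funext => x; rewrite mul1r.
Qed.

Lemma sup0 (f : M -> K^o) : supnorm_le f 0 -> f = (fun _ => 0).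
Proof. by move=> H; apply/funext => x; apply/normr0_eq0/eqP; rewrite eq_le normr_ge0 H. Qed.

Lemma Tinj f g : E f -> E g -> T f = T g -> f = g.
Proof.
move=> Ef Eg Tfg.
have : supnorm_le (T (fun x => f x - g x)) 0.
  by rewrite TB// Tfg => x; rewrite subrr normr0.
move/(Tiso (E_sub Ef Eg))/sup0 => H; apply/funext => x.
by apply/eqP; rewrite -subr_eq0; have := congr1 (fun h => h x) H => /= ->.
Qed.


Variable g0 : M -> K^o.
Hypothesis Eg0 : E g0.
Hypothesis g0notin : ~ (exists2 h, E h & g0 = T h).
Hypothesis dec : forall f, E f -> exists2 h, E h & exists c : K, f = (fun x => T h x + c * g0 x).
Variable m0 : M.

Lemma dec_uniq h h' c c' : E h -> E h' ->
  (fun x => T h x + c * g0 x) = (fun x => T h' x + c' * g0 x) -> c = c' /\ h = h'.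
Proof.
move=> Eh Eh' eq.
have eqx x : T h x - T h' x = (c' - c) * g0 x.
  have := congr1 (fun k => k x) eq => /= e1.
  have -> : T h x = T h' x + c' * g0 x - c * g0 x by rewrite -e1 addrK.
  ring.
have cc : c = c'.
  apply/eqP; apply/negPn/negP => cc'.
  have c0 : c' - c != 0 by rewrite subr_eq0 eq_sym.
  apply: g0notin; exists (fun x => (c' - c)^-1 * (h x - h' x)).
    exact/E_scale/E_sub.
  rewrite TZ; last exact: E_sub.
  rewrite TB//; apply/funext => x.
  by rewrite eqx mulKf.
split => //; apply: Tinj => //; apply/funext => x.
by apply/eqP; rewrite -subr_eq0 eqx cc subrr mul0r.
Qed.

Definition dp f : K * (M -> K^o) :=
  epsilon (inhabits (0, fun _ => 0)) (fun p => E p.2 /\ f = fun x => T p.2 x + p.1 * g0 x).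
Definition Lam f := (dp f).1.
Definition S f := (dp f).2.

Lemma dpP f : E f -> E (S f) /\ f = fun x => T (S f) x + Lam f * g0 x.
Proof.
move=> Ef; have [h Eh [c ec]] := dec Ef.
exact: (@epsilon_spec _ (inhabits (0, fun _ => 0))
  (fun p : K * (M -> K^o) => E p.2 /\ f = fun x => T p.2 x + p.1 * g0 x)
  (ex_intro _ (c, h) (conj Eh ec))).
Qed.

Lemma dp_eq f h c : E h -> f = (fun x => T h x + c * g0 x) -> Lam f = c /\ S f = h.
Proof.
move=> Eh ef; have Ef : E f.
  have : E (fun x => c * g0 x + T h x) by apply: E_lin => //; exact: TE.
  by rewrite ef (_ : (fun x => c * g0 x + T h x) = (fun x => T h x + c * g0 x))//; apply/funext => x; rewrite addrC.
have [ES1 e2] := dpP Ef.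
have [-> ->] := dec_uniq ES1 Eh (etrans (esym e2) ef); by [].
Qed.

Lemma ES f : E f -> E (S f). Proof. by move=> /dpP[]. Qed.

Lemma dp_lin a f g : E f -> E g ->
  Lam (fun x => a * f x + g x) = a * Lam f + Lam g /\
  S (fun x => a * f x + g x) = (fun x => a * S f x + S g x).
Proof.
move=> Ef Eg; have [Ef1 ef] := dpP Ef; have [Eg1 eg] := dpP Eg.
apply: dp_eq; first by apply: E_lin.
rewrite Tlin//; apply/funext => x.
rewrite {1}ef {1}eg /=; rewrite mulrDr mulrDl mulrA; rewrite -!addrA; congr (_ + _).
by rewrite addrCA addrA.
Qed.


Hypothesis AK : forall x : K, 0 < x -> exists n : nat, x < n%:R.
Hypothesis CK : forall u : nat -> K,
  (forall n m, (n <= m)%N -> `|u n - u m| <= n.+1%:R^-1) ->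
  exists l, forall n, `|u n - l| <= 2 / n.+1%:R.

Lemma archK (e : K) : 0 < e -> exists n : nat, n.+1%:R^-1 < e.
Proof.
move=> e0; have ei : 0 < e^-1 by rewrite invr_gt0.
have [n Hn] := AK ei; exists n.
rewrite -[e]invrK ltf_pV2 ?posrE ?invr_gt0 ?ltr0Sn//.
by apply: (lt_le_trans Hn); rewrite ler_nat.
Qed.

Lemma small0 (z : K) (c : K) : 0 < c -> (forall n, `|z| <= c * n.+1%:R^-1) -> z = 0.
Proof.
move=> c0 H; apply/eqP; apply/negPn/negP => z0.
have zp : 0 < `|z| / c by rewrite divr_gt0 ?normr_gt0.
have [n Hn] := archK zp.
have Hc : c * n.+1%:R^-1 < `|z| by rewrite mulrC -ltr_pdivlMr.
by have := H n; rewrite (lt_geF Hc).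
Qed.

Lemma sup_ge0 (f : M -> K^o) r : supnorm_le f r -> 0 <= r.
Proof. by move=> H; apply: le_trans (H m0). Qed.

Lemma contP (f : M -> K^o) :
 continuous f <-> forall x (e : K), 0 < e ->
   exists2 d : R, 0 < d & forall y, mdist x y < d -> `|f x - f y| < e.
Proof.
split.
- move=> fc x e e0; have /cvgrPdist_lt/(_ e e0) := fc x.
  move=> /nbhs_ballP [d d0 Hd]; exists d => // y xy; apply: Hd.
  by rewrite ballEmdist.
- move=> H x; apply/cvgrPdist_lt => e e0; have [d d0 Hd] := H x e e0.
  apply/nbhs_ballP; exists d => // y; rewrite ballEmdist; exact: Hd.
Qed.

Lemma dpos : exists2 d : K, 0 < d &
  forall h, E h -> forall r, supnorm_le (fun x => T h x + g0 x) r -> d <= r.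
Proof.
case: (classic (exists n : nat, forall h, E h -> forall r,
   supnorm_le (fun x => T h x + g0 x) r -> n.+1%:R^-1 <= r)) => [[n Hn]|Hno].
  by exists n.+1%:R^-1; rewrite ?invr_gt0 ?ltr0Sn.
exfalso.
have Hn1 n : exists h, E h /\ supnorm_le (fun x => T h x + g0 x) (n.+1%:R^-1).
  apply: NNPP => H; apply: Hno; exists n => h Eh r Hr.
  have r0 := sup_ge0 Hr.
  rewrite real_leNgt ?realE ?r0 ?invr_ge0 ?ler0n//; apply/negP => rn.
  by apply: H; exists h; split => // x; apply: le_trans (Hr x) (ltW rn).
pose hs n := epsilon (inhabits (fun _ => 0 : K^o))
  (fun h => E h /\ supnorm_le (fun x => T h x + g0 x) (n.*2.+1.+1%:R^-1)).
have hsP n : E (hs n) /\ supnorm_le (fun x => T (hs n) x + g0 x) (n.*2.+1.+1%:R^-1).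
  exact: (epsilon_spec (inhabits (fun _ => 0 : K^o))
    (fun h => E h /\ supnorm_le (fun x => T h x + g0 x) (n.*2.+1.+1%:R^-1)) (Hn1 n.*2.+1)).
have half n : n.*2.+1.+1%:R^-1 = n.+1%:R^-1 / 2 :> K.
  by rewrite -invfM -natrM mulnC mul2n doubleS.
have cauchy n m x : (n <= m)%N -> `|hs n x - hs m x| <= n.+1%:R^-1.
  move=> nm; have [En Hn] := hsP n; have [Em Hm] := hsP m.
  have : supnorm_le (T (fun x => hs n x - hs m x)) (n.+1%:R^-1).
    rewrite TB// => y.
    have -> : T (hs n) y - T (hs m) y = (T (hs n) y + g0 y) - (T (hs m) y + g0 y).
      by rewrite opprD addrACA subrr addr0.
    have := ler_normB (T (hs n) y + g0 y) (T (hs m) y + g0 y).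
    move/le_trans; apply.
    rewrite [X in _ <= X]splitr lerD//; first by rewrite -half; apply: Hn.
    apply: le_trans (Hm y) _; rewrite !half ler_pM2r ?invr_gt0 ?ltr0n//.
    by rewrite lef_pV2 ?posrE ?ltr0Sn// ler_nat.
  by move/(Tiso (E_sub En Em)) => /(_ x).
pose hl x := epsilon (inhabits (0 : K)) (fun l => forall n, `|hs n x - l| <= 2 / n.+1%:R).
have hlP x n : `|hs n x - hl x| <= 2 / n.+1%:R.
  move: n; exact: (epsilon_spec (inhabits (0 : K))
    (fun l => forall n, `|hs n x - l| <= 2 / n.+1%:R) (CK (fun n m => @cauchy n m x))).
have Ehl : E hl.
  split.
    apply/contP => x e e0.
    have e60 : 0 < e / 6%:R by rewrite divr_gt0 ?ltr0n.
    have [n Hn] := archK e60.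
    have [En _] := hsP n; have [cn _] := En.
    have e30 : 0 < e / 3%:R by rewrite divr_gt0 ?ltr0n.
    have [d d0 Hd] := (iffLR (contP (hs n)) cn) x _ e30.
    exists d => // y xy.
    have h2 : 2 / n.+1%:R < e / 3%:R.
      rewrite (_ : e / 3%:R = 2 * (e / 6%:R)); last first.
        rewrite (_ : 6%:R = 2 * 3%:R :> K); last by rewrite -natrM.
        by rewrite invfM mulrCA [2 * _]mulrA mulfV ?mul1r// pnatr_eq0.
      by rewrite ltr_pM2l.
    have -> : hl x - hl y = (hl x - hs n x) + (hs n x - hs n y) + (hs n y - hl y).
      by rewrite !addrA subrK addrNK.
    have e3 : e / 3%:R + e / 3%:R + e / 3%:R = e.
      by rewrite -mulr2n -mulrSr -(mulr_natr (e / 3%:R) 3) divfK ?pnatr_eq0.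
    rewrite -[X in _ < X]e3.
    apply: (le_lt_trans (ler_normD _ _)); rewrite ltrD//; last exact: le_lt_trans (hlP y n) h2.
    apply: (le_lt_trans (ler_normD _ _)); rewrite ltrD//; last exact: Hd.
    by rewrite distrC; exact: le_lt_trans (hlP x n) h2.
  have [E0' _] := hsP 0; have [_ [B HB]] := E0'.
  exists (B + 2) => x.
  have -> : hl x = hs 0 x - (hs 0 x - hl x) by rewrite opprB addrC subrK.
  apply: le_trans (ler_normB _ _) _; rewrite lerD// (le_trans (hlP x 0))//.
  by rewrite divr1.
have Z : forall x, T hl x + g0 x = 0.
  move=> x; apply: (@small0 _ 3%:R) => // n.
  have [En Hn] := hsP n.
  have Hd : supnorm_le (T (fun y => hl y - hs n y)) (2 / n.+1%:R).
    by apply/(Tiso (E_sub Ehl En)) => y; rewrite distrC hlP.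
  move: Hd; rewrite TB// => /(_ x) Hd.
  have -> : T hl x + g0 x = (T hl x - T (hs n) x) + (T (hs n) x + g0 x).
    by rewrite addrA subrK.
  apply: le_trans (ler_normD _ _) _.
  rewrite (_ : 3%:R * n.+1%:R^-1 = 2 / n.+1%:R + n.+1%:R^-1) ?lerD//.
    apply: le_trans (Hn x) _; rewrite half ler_pdivrMr// ler_peMr ?invr_ge0 ?ler0n//.
    by rewrite ler1n.
  by ring.
apply: g0notin; exists (fun x => -1 * hl x); first exact: E_scale.
rewrite TZ//; apply/funext => x; rewrite mulN1r; apply/eqP.
by rewrite -addr_eq0 addrC Z.
Qed.


Hypothesis Hint : forall f, E f ->
  (forall n : nat, (0 < n)%N -> exists2 h, E h & f = iter n T h) -> f = (fun _ => 0).

Lemma phis : exists phi : nat -> (M -> K^o) -> K, exists C : nat -> K,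
  [/\ (forall k, 0 < C k),
   (forall k a f g, E f -> E g -> phi k (fun x => a * f x + g x) = a * phi k f + phi k g),
   (forall k f r, E f -> supnorm_le f r -> `|phi k f| <= C k * r) &
   (forall f, E f -> (forall k, phi k f = 0) -> f = fun _ => 0)].
Proof.
have [d d0 Hd] := dpos.
have [_ [G HG]] := Eg0; have G0 := sup_ge0 HG.
have LamB f r : E f -> supnorm_le f r -> `|Lam f| * d <= r.
  move=> Ef Hf; have [ESf ef] := dpP Ef; have r0 := sup_ge0 Hf.
  have [c0|c0] := eqVneq (Lam f) 0; first by rewrite c0 normr0 mul0r.
  pose h := fun x => (Lam f)^-1 * S f x.
  have Eh : E h by apply: E_scale.
  have : supnorm_le (fun x => T h x + g0 x) (r / `|Lam f|).
    move=> x; rewrite /h TZ// (_ : _ + _ = (Lam f)^-1 * f x).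
      by rewrite normrM normfV mulrC ler_wpM2r ?invr_ge0.
    have -> : f x = T (S f) x + Lam f * g0 x by rewrite {1}ef.
    by rewrite mulrDr mulrA mulVf ?mul1r.
  by move/(Hd _ Eh); rewrite ler_pdivlMr ?normr_gt0// mulrC.
pose C := 1 + G / d.
have C0 : 0 < C by rewrite /C (lt_le_trans ltr01)// lerDl divr_ge0// ltW.
have SB f r : E f -> supnorm_le f r -> supnorm_le (S f) (r * C).
  move=> Ef Hf; have [ESf ef] := dpP Ef; have r0 := sup_ge0 Hf.
  apply/(Tiso ESf) => x.
  have eqx := congr1 (fun k => k x) ef; simpl in eqx.
  have -> : T (S f) x = f x - Lam f * g0 x by rewrite [f x]eqx addrK.
  apply: (le_trans (ler_normB _ _)).
  rewrite /C mulrDr mulr1 lerD// normrM.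
  apply: (@le_trans _ _ (r / d * G)); last by rewrite mulrAC -mulrA.
  apply: ler_pM => //.
  by rewrite ler_pdivlMr// LamB.
have iterE k f : E f -> E (iter k S f).
  by move=> Ef; elim: k => //= k IH; apply: ES.
have iterB k f r : E f -> supnorm_le f r -> supnorm_le (iter k S f) (r * C ^+ k).
  move=> Ef Hf; elim: k => [|k IH] /=; first by rewrite expr0 mulr1.
  by rewrite exprS mulrCA mulrC; apply: SB => //; apply: iterE.
have iterL k a f g : E f -> E g ->
    iter k S (fun x => a * f x + g x) = (fun x => a * iter k S f x + iter k S g x).
  move=> Ef Eg; elim: k => //= k ->.
  by have [_ ->] := dp_lin a (iterE k f Ef) (iterE k g Eg).
exists (fun k f => Lam (iter k S f)), (fun k => C ^+ k / d); split.
- by move=> k; rewrite divr_gt0// exprn_gt0.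
- move=> k a f g Ef Eg /=; rewrite iterL//.
  by have [-> _] := dp_lin a (iterE k f Ef) (iterE k g Eg).
- move=> k f r Ef Hf /=.
  have := LamB _ _ (iterE k f Ef) (iterB k f r Ef Hf).
  rewrite (_ : C ^+ k / d * r = (r * C ^+ k) / d); last by ring.
  by rewrite ler_pdivlMr.
- move=> f Ef H0; apply: Hint => // n _.
  exists (iter n S f); first exact: iterE.
  elim: n => // n IH.
  have [ES1 e1] := dpP (iterE n f Ef).
  rewrite iterSr iterS; rewrite [in LHS]IH; congr (iter n T _).
  by rewrite {1}e1 H0; apply/funext => x; rewrite mul0r addr0.
Qed.


Lemma famB (A : set M) (b : M -> (M -> K^o)) (phi : nat -> (M -> K^o) -> K) (C : nat -> K) :
  (forall k, 0 < C k) ->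
  (forall k a f g, E f -> E g -> phi k (fun x => a * f x + g x) = a * phi k f + phi k g) ->
  (forall k f r, E f -> supnorm_le f r -> `|phi k f| <= C k * r) ->
  (forall f, E f -> (forall k, phi k f = 0) -> f = fun _ => 0) ->
  (forall a, A a -> E (b a)) -> (forall a, A a -> b a a != 0) ->
  (forall a x, `|b a x| <= 1) ->
  (forall a a', A a -> A a' -> a != a' -> forall x, b a x = 0 \/ b a' x = 0) ->
  countable A.
Proof.
move=> C0 plin pbd psep Eb b0 b1 bdisj.
have phi0 k : phi k (fun _ => 0) = 0.
  have := plin k (-1) _ _ E0 E0.
  rewrite (_ : (fun x : M => -1 * 0 + 0) = (fun _ => 0 : K^o)); last first.
    by apply/funext => x; rewrite mulr0 addr0.
  by move=> ->; rewrite mulN1r addNr.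
pose Akm k m := [set a | A a /\ m.+1%:R^-1 < `|phi k (b a)|].
have sub : A `<=` \bigcup_(k in setT) \bigcup_(m in setT) Akm k m.
  move=> a Aa; apply: NNPP => nb.
  have : forall k, phi k (b a) = 0.
    move=> k; apply/eqP/negPn/negP => nz.
    have nzp : 0 < `|phi k (b a)| by rewrite normr_gt0.
    have [m Hm] := archK nzp.
    by apply: nb; exists k => //; exists m.
  move/(psep _ (Eb a Aa)) => ba; move: (b0 a Aa); rewrite ba eqxx //.
apply: sub_countable (subset_card_le sub) _.
apply: bigcup_countable; first exact: card_lexx.
move=> k _; apply: bigcup_countable; first exact: card_lexx.
move=> m _; apply: finite_set_countable.
apply: NNPP => inf.
have Cm0 : 0 < m.+1%:R * C k by rewrite mulr_gt0 ?ltr0Sn.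
have [N HN] := AK Cm0.
have [B BA cardB] := infinite_set_fset N inf.
pose s := enum_fset B.
have sA a : a \in s -> Akm k m a by move=> ain; apply: BA.
pose u a := `|phi k (b a)| / phi k (b a).
pose fs (t : seq M) := fun x => \sum_(a <- t) u a * b a x.
have Efs t : (forall a, a \in t -> A a) -> E (fs t) /\
    phi k (fs t) = \sum_(a <- t) u a * phi k (b a).
  elim: t => [|a t IH] tA.
    rewrite /fs big_nil (_ : (fun x => \sum_(a <- [::]) u a * b a x) = (fun _ => 0 : K^o)).
      by split => //; exact: E0.
    by apply/funext => x; rewrite big_nil.
  have [Et pt] : E (fs t) /\ phi k (fs t) = \sum_(a <- t) u a * phi k (b a).
    by apply: IH => a' a't; apply: tA; rewrite inE a't orbT.
  have Ea : E (b a) by apply: Eb; apply: tA; rewrite mem_head.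
  have -> : fs (a :: t) = (fun x => u a * b a x + fs t x).
    by apply/funext => x; rewrite /fs big_cons.
  by split; [apply: E_lin | rewrite plin// big_cons pt].
have norm1 t : uniq t -> (forall a, a \in t -> A a) -> supnorm_le (fs t) 1.
  move=> ut tA x.
  have ub a : `|u a * b a x| <= 1.
    rewrite normrM /u normrM normfV normr_id.
    have [->|nz] := eqVneq (phi k (b a)) 0; first by rewrite normr0 mul0r mul0r ler01.
    by rewrite mulfV ?normr_eq0// mul1r.
  suff : (forall a, a \in t -> b a x = 0) \/ exists2 a, a \in t & fs t x = u a * b a x.
    case=> [H|[a _ ->]]//.
    rewrite /fs big1_seq ?normr0 ?ler01// => a /andP[_ ain].
    by rewrite H ?mulr0.
  elim: t ut tA => [|a t IH] /= ut tA; first by left.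
  move/andP: ut => [anot ut].
  have tA' a' : a' \in t -> A a' by move=> a't; apply: tA; rewrite inE a't orbT.
  have Aa : A a by apply: tA; rewrite mem_head.
  have [ba0|banz] := eqVneq (b a x) 0.
    have [H|[a' a't H]] := IH ut tA'.
      left => a'; rewrite inE => /orP[/eqP->//|]; exact: H.
    right; exists a'; first by rewrite inE a't orbT.
    by rewrite /fs big_cons ba0 mulr0 add0r -H.
  right; exists a; first exact: mem_head.
  rewrite /fs big_cons big1_seq ?addr0// => a' /andP[_ a't].
  have aa' : a != a' by apply/eqP => e; rewrite e a't in anot.
  by case: (bdisj a a' Aa (tA' a' a't) aa' x) => [e|->]; [rewrite e eqxx in banz | rewrite mulr0].
have uniqs : uniq s by exact: fset_uniq.
have sA' a : a \in s -> A a by move=> /sA [].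
have [Es ps] := Efs s sA'.
have Hs := norm1 s uniqs sA'.
have psum : phi k (fs s) = \sum_(a <- s) `|phi k (b a)|.
  rewrite ps; apply: eq_big_seq => a /sA [_ H].
  rewrite /u divfK// -normr_gt0 (lt_trans _ H)// invr_gt0 ltr0Sn//.
have lowerG (t : seq M) : (forall a, a \in t -> m.+1%:R^-1 < `|phi k (b a)|) ->
    (size t)%:R * m.+1%:R^-1 <= \sum_(a <- t) `|phi k (b a)|.
  elim: t => [|a t IH] H; first by rewrite big_nil mul0r.
  rewrite big_cons /= -addn1 natrD mulrDl mul1r addrC lerD//.
    by apply: ltW; apply: H; rewrite mem_head.
  by apply: IH => a' a't; apply: H; rewrite inE a't orbT.
have lower := lowerG s (fun a ain => proj2 (sA a ain)).
have upper : \sum_(a <- s) `|phi k (b a)| <= C k.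
  rewrite -psum; apply: le_trans (real_ler_norm _) _.
    by rewrite psum realE sumr_ge0//; move=> a _; rewrite normr_ge0.
  by have := pbd k _ 1 Es Hs; rewrite mulr1.
have := le_trans lower upper.
rewrite -ler_pdivlMr ?invr_gt0 ?ltr0Sn// invrK => H.
have : (N <= size s)%N by [].
rewrite -(ler_nat K) => HNs.
have := lt_le_trans HN (le_trans HNs (le_trans H (le_refl _))).
by rewrite mulrC ltxx.
Qed.

End Gen.

Lemma max0_lip (R : realType) (u v : R) :
  `|Num.max 0 u - Num.max 0 v| <= `|u - v|.
Proof.
have h1 := ler_norm (u - v); have h2 := ler_norm (v - u); rewrite distrC in h2.
rewrite ler_norml; case: (leP u 0) => hu; case: (leP v 0) => hv; apply/andP; split; lra.
Qed.

Lemma dist_lip (R : realType) (M : metricType R) (a x y : M) :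
  `|mdist a x - mdist a y| <= mdist x y.
Proof.
have t1 := metric_triangle a y x; have t2 := metric_triangle a x y.
have s := metric_sym y x; rewrite ler_norml; apply/andP; split; lra.
Qed.

Lemma bumps (R : realType) (M : metricType R) (K : numFieldType) (emb : R -> K)
  (econt : forall e : K, 0 < e -> exists2 d : R, 0 < d &
       forall s t, `|s - t| < d -> `|emb s - emb t| < e)
  (ebd : forall t, 0 <= t <= 1 -> `|emb t| <= 1) (e0 : emb 0 = 0) (e1 : emb 1 != 0)
  (eps : R) (A : set M) : 0 < eps ->
  (forall a a', A a -> A a' -> a != a' -> eps <= mdist a a') ->
  exists b : M -> (M -> K^o), [/\ forall a, Cstar (b a), forall a, b a a != 0,
     forall a x, `|b a x| <= 1 &
     forall a a', A a -> A a' -> a != a' -> forall x, b a x = 0 \/ b a' x = 0].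
Proof.
move=> eps0 sepA.
pose beta (a x : M) := Num.max 0 (1 - 2 * mdist a x / eps).
have b01 a x : 0 <= beta a x <= 1.
  by rewrite /beta le_max lexx /= ge_max ler01 /= gerBl divr_ge0 ?mulr_ge0 ?mdist_ge0 ?ler0n ?(ltW eps0).
have bnz a x : beta a x != 0 -> mdist a x < eps / 2.
  rewrite /beta; case: (leP (1 - 2 * mdist a x / eps) 0) => h.
    by rewrite eqxx.
  move=> _; move: h; rewrite subr_gt0 ltr_pdivrMr// mul1r => h.
  by rewrite ltr_pdivlMr// mulrC.
exists (fun a x => emb (beta a x)); split.
- move=> a; split; last by exists 1 => x; apply: ebd.
  apply/contP => x e epos.
  have [d d0 Hd] := econt e epos.
  exists (d * eps / 2); first by rewrite !mulr_gt0 ?invr_gt0.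
  move=> y xy; apply: Hd.
  apply: (le_lt_trans (max0_lip _ _)).
  have -> : 1 - 2 * mdist a x / eps - (1 - 2 * mdist a y / eps) =
    2 * (mdist a y - mdist a x) / eps by ring.
  rewrite normrM normfV normrM (ger0_norm (_ : 0 <= 2)) ?ler0n// (gtr0_norm eps0).
  rewrite ltr_pdivrMr//.
  have dl := dist_lip a y x; rewrite metric_sym in xy.
  have : `|mdist a y - mdist a x| < d * eps / 2 by apply: le_lt_trans dl xy.
  move: (`|mdist a y - mdist a x|) => N; lra.
- move=> a; rewrite /beta mdistxx mulr0 mul0r subr0 max_r ?ltr01//.
- move=> a x; exact: ebd.
- move=> a a' Aa Aa' aa' x.
  case: (eqVneq (beta a x) 0) => [->|h]; first by left.
  case: (eqVneq (beta a' x) 0) => [->|h']; first by right.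
  have h3 := sepA a a' Aa Aa' aa'.
  have t := metric_triangle a x a'; rewrite (metric_sym x a') in t.
  have h1 := bnz a x h; have h2 := bnz a' x h'.
  have : eps < eps by lra.
  by rewrite ltxx.
Qed.

Lemma sepC (R : realType) (M : metricType R) :
  (forall (e : R) (A : set M), 0 < e ->
     (forall a a', A a -> A a' -> a != a' -> e <= mdist a a') -> countable A) ->
  separable_space M.
Proof.
move=> H.
pose P (n : nat) (A : set M) :=
  forall a a', A a -> A a' -> a != a' -> n.+1%:R^-1 <= mdist a a'.
have maxA n : exists A, P n A /\ forall B, A `<` B -> ~ P n B.
  apply: Zorn_bigcup => F FP tot a a' [X FX Xa] [Y FY Ya'] aa'.
  case: (tot X Y FX FY) => XY.
  - exact: (FP Y FY) (XY _ Xa) Ya' aa'.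
  - exact: (FP X FX) Xa (XY _ Ya') aa'.
pose An n := epsilon (inhabits set0) (fun A => P n A /\ forall B, A `<` B -> ~ P n B).
have AnP n : P n (An n) /\ forall B, An n `<` B -> ~ P n B.
  exact: (epsilon_spec (inhabits set0) (fun A => P n A /\ forall B, A `<` B -> ~ P n B) (maxA n)).
exists (\bigcup_(n in setT) An n); split.
  apply: bigcup_countable; first exact: card_lexx.
  move=> n _; apply: (H n.+1%:R^-1); first by rewrite invr_gt0 ltr0Sn.
  exact: (AnP n).1.
move=> O [x Ox] oO.
have /nbhs_ballP [r r0 Hr] := open_nbhs_nbhs (conj oO Ox).
have [n Hn] : exists n : nat, n.+1%:R^-1 < r.
  have ri : 0 < r^-1 by rewrite invr_gt0.
  have [n Hn] := AK_R ri; exists n.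
  rewrite -[r]invrK ltf_pV2 ?posrE ?invr_gt0 ?ltr0Sn//.
  by apply: (lt_le_trans Hn); rewrite ler_nat.
have [Pn maxn] := AnP n.
case: (classic (An n x)) => [Ax|nAx].
  by exists x; split => //; exists n.
have : ~ P n (An n `|` [set x]).
  apply: maxn; split; first exact: subsetUl.
  move=> sub; apply: nAx; apply: sub; by right.
move=> nP; apply: NNPP => none.
apply: nP => a a' [Aa|->] [Aa'|->] aa'.
- exact: Pn.
- rewrite metric_sym; rewrite real_leNgt ?realE ?mdist_ge0 ?invr_ge0 ?ler0n//.
  apply/negP => lt; apply: none; exists a; split; last by exists n.
  by apply: Hr; rewrite ballEmdist; apply: lt_trans lt Hn.
- rewrite real_leNgt ?realE ?mdist_ge0 ?invr_ge0 ?ler0n//.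
  apply/negP => lt; apply: none; exists a'; split; last by exists n.
  by apply: Hr; rewrite ballEmdist; apply: lt_trans lt Hn.
- by rewrite eqxx in aa'.
Qed.

Lemma mainK (R : realType) (M : metricType R) (K : numFieldType) (emb : R -> K)
  (AK : forall x : K, 0 < x -> exists n : nat, x < n%:R)
  (CK : forall u : nat -> K,
    (forall n m, (n <= m)%N -> `|u n - u m| <= n.+1%:R^-1) ->
    exists l, forall n, `|u n - l| <= 2 / n.+1%:R)
  (econt : forall e : K, 0 < e -> exists2 d : R, 0 < d &
       forall s t, `|s - t| < d -> `|emb s - emb t| < e)
  (ebd : forall t, 0 <= t <= 1 -> `|emb t| <= 1) (e0 : emb 0 = 0) (e1 : emb 1 != 0) :
  has_isometric_shift K M -> separable_space M.
Proof.
move=> [T [TE Tlin Tiso [g0 Eg0 [gn dec]] Hint]].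
case: (classic (exists m : M, True)) => [[m0 _]|noM]; last first.
  exists set0; split; first exact: countable0.
  by move=> O [x _]; exfalso; apply: noM; exists x.
have [phi [C [C0 plin pbd psep]]] := phis TE Tlin Tiso Eg0 gn dec m0 AK CK Hint.
apply: sepC => e A e0' sepA.
have [b [Eb bnz b1 bdisj]] := bumps econt ebd e0 e1 e0' sepA.
exact: (famB AK C0 plin pbd psep (fun a _ => Eb a) (fun a _ => bnz a) b1 bdisj).
Qed.

Local Close Scope classical_set_scope.
Theorem theorem1 (R : realType) (M : metricType R) :
  complete_space M ->
  (has_isometric_shift R M -> separable_space M) /\
  (has_isometric_shift R[i] M -> separable_space M).
Proof.
Local Open Scope complex_scope.
move=> _; split.
- apply: (@mainK R M R id).
  + exact: AK_R.
  + move=> u H; have [l Hl] := CK_R H; exists l => n.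
    apply: (le_trans (Hl n)); rewrite ler_pdivlMr ?ltr0Sn// mulVf ?pnatr_eq0// ler1n//.
  + by move=> e e0; exists e.
  + by move=> t /andP[t0 t1]; rewrite ger0_norm.
  + by [].
  + exact: oner_neq0.
- apply: (@mainK R M R[i] (fun t => t%:C)).
  + exact: AK_C.
  + exact: CK_C.
  + move=> e; case: e => a b; rewrite ltcE /= => /andP[/eqP -> a0].
    exists a => // s t st; rewrite -rmorphB /= normCr ltcR//.
  + by move=> t /andP[t0 t1]; rewrite normCr -[1]/(1%:C) lecR ger0_norm.
  + by [].
  + apply/eqP; move/(congr1 (@complex.Re R)) => /= /eqP; by rewrite oner_eq0.
Qed.
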